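(* Let $\omega=SSw$ be an attack cycle starting with two letters S, where $w=w_1\cdots w_\nu$ with $w_\nu=H$, and let $X_0=0$, $X_i=X_{i-1}+1$ if $w_i=S$, $X_i=X_{i-1}-1$ if $w_i=H$. Let $H(\omega)$ be the number of indices $1\le i\le\nu$ with $X_i<n_1-2$ and $X_i<X_{i-1}$. Then $$\mathbb{E}[H(\omega)\mid \omega=SS\ldots]=\frac{p}{p-q}\Bigl(1-\Bigl(\frac qp\Bigr)^{n_1-1}\Bigr).$$
   Context: Honest hashrate $p$, attacker hashrate $q$, $p+q=1$, $0<q<p$; $n_1\ge 2$ is an integer (the maximal uncle–nephew distance in Ethereum). Attack cycles starting with SS are the words $SSw'H$ with $w'$ a Dyck word over $\{S,H\}$, with $\mathbb{P}[SSw'H]=q^2p(pq)^{|w'|}$ ($|w'|$ half the length of $w'$); equivalently, conditional on starting with SS, the path $(X_i)$ is a random walk from $0$ with up-steps of probability $q$ and down-steps of probability $p$, stopped at its first visit to $-1$ (at time $\nu$). *)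

(* Defs.v *)
From HB Require Import structures.
From mathcomp Require Import all_boot all_order all_algebra.
From mathcomp Require Import all_classical all_reals all_analysis.
Set Implicit Arguments. Unset Strict Implicit. Unset Printing Implicit Defensive.
Import Order.TTheory GRing.Theory Num.Theory.
Local Open Scope ring_scope.

(* A word w = w_1 ... w_nu over {S,H} is a seq bool: true = S, false = H.
   nth false w (i-1) is the letter w_i. *)

Definition Xpos (w : seq bool) (i : nat) : int :=
  \sum_(j < i) (if nth false w j then 1 else -1).

(* w is the part after the initial SS of an attack cycle: the walk from 0
   stays >= 0 before the end and first hits -1 at time nu = size w. *)
Definition first_passage (w : seq bool) : bool :=
  all (fun i => 0 <= Xpos w i) (iota 0 (size w)) && (Xpos w (size w) == -1).

Definition Hcount (n1 : nat) (w : seq bool) : nat :=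
  count (fun i => (Xpos w i < n1%:Z - 2) && (Xpos w i < Xpos w i.-1))
        (iota 1 (size w)).

(* Conditional probability of the path w given omega starts with SS:
   q per up-step, p per down-step (= p (pq)^{|w'|} for w = w'H). *)
Definition path_weight {R : ringType} (p q : R) (w : seq bool) : R :=
  p ^+ count negb w * q ^+ count idfun w.

(* Contribution to E[H | SS...] of the paths of length m. *)
Definition H_term {R : ringType} (p q : R) (n1 : nat) (m : nat) : R :=
  \sum_(t : m.-tuple bool | first_passage t)
     path_weight p q t * (Hcount n1 t)%:R.

(* Main.v *)
Require Import Defs.
From HB Require Import structures.
From mathcomp Require Import all_boot all_order all_algebra.
From mathcomp Require Import all_classical all_reals all_analysis.
From mathcomp Require Import zify ring lra.
Import Order.TTheory GRing.Theory Num.Theory.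
Import numFieldNormedType.Exports.
Local Open Scope classical_set_scope.
Local Open Scope ring_scope.

Definition st (x : bool) : int := if x then 1 else -1.

Lemma Xpos0 w : Xpos w 0 = 0.
Proof. by rewrite /Xpos big_ord0. Qed.

Lemma XposS x w i : Xpos (x :: w) i.+1 = st x + Xpos w i.
Proof. by rewrite /Xpos big_ord_recl /=. Qed.

Definition fpz (a : int) (w : seq bool) : bool :=
  all (fun i => 0 <= a + Xpos w i) (iota 0 (size w)) && (a + Xpos w (size w) == -1).

Lemma fpz_nil a : fpz a [::] = (a == -1).
Proof. by rewrite /fpz /= Xpos0 addr0. Qed.

Lemma fpz_cons a x w : fpz a (x :: w) = (0 <= a) && fpz (a + st x) w.
Proof.
rewrite /fpz /= Xpos0 addr0 XposS addrA -andbA; congr (_ && (_ && _)).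
rewrite -(addn0 1%N) iotaDl all_map; apply: eq_all => i /=.
by rewrite add1n XposS addrA.
Qed.

Fixpoint fpn (b : nat) (w : seq bool) : bool :=
  match w with [::] => b == 0%N | x :: w' => (b != 0%N) && fpn (if x then b.+1 else b.-1) w' end.

Lemma fpz_fpn w b : fpz (b%:Z - 1) w = fpn b w.
Proof.
elim: w b => [|x w IH] b; first by rewrite fpz_nil /=; apply/eqP/eqP; lia.
rewrite fpz_cons /=; case: b => [|b].
  by apply/negbTE; lia.
have -> : (0 <= b.+1%:Z - 1) = true by apply/idP; lia.
rewrite -IH; case: x => /=; congr fpz; rewrite /st; lia.
Qed.

Section H.
Variable n1 : nat.
Definition hcz (a : int) (w : seq bool) : nat :=
  count (fun i => (a + Xpos w i < n1%:Z - 2) && (Xpos w i < Xpos w i.-1))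
        (iota 1 (size w)).

Lemma hcz_cons a x w : hcz a (x :: w) =
  addn ((a + st x < n1%:Z - 2) && (st x < 0)) (hcz (a + st x) w).
Proof.
rewrite /hcz /= XposS !Xpos0 addr0; congr (_ + _)%N.
rewrite (iotaDl 1 1) count_map; apply: eq_in_count => i /=.
rewrite mem_iota => /andP[i1 _].
rewrite add1n XposS /= -(prednK i1) XposS ltrD2l addrA //.
Qed.

Fixpoint hcn (b : nat) (w : seq bool) : nat :=
  match w with [::] => 0%N
  | x :: w' => ((if x then false else (b.-1 < n1.-1)%N) + hcn (if x then b.+1 else b.-1) w')%N end.

Lemma hcz_hcn w b : fpn b w -> hcz (b%:Z - 1) w = hcn b w.
Proof.
elim: w b => [|x w IH] b //=; rewrite hcz_cons.
case: b => [|b] //= /IH; case: x => /= <-.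
  congr (_ + hcz _ _)%N; last by rewrite /st; lia.
  by rewrite (_ : (1 < 0 :> int) = false) ?andbF.
congr (nat_of_bool _ + hcz _ _)%N; last by lia.
rewrite (_ : (-1 < 0 :> int) = true) // andbT; apply/idP/idP; lia.
Qed.
End H.
Section Sums.
Variable R : realType.
Variables (p q : R) (n1 : nat).

Lemma pw_cons x w : path_weight p q (x :: w) = (if x then q else p) * path_weight p q w.
Proof.
rewrite /path_weight /=; case: x => /=; rewrite ?add0n ?add1n !exprS; ring.
Qed.

Lemma big_tuple_cons (F : seq bool -> R) m :
  \sum_(t : m.+1.-tuple bool) F t =
  \sum_(t : m.-tuple bool) F (true :: t) + \sum_(t : m.-tuple bool) F (false :: t).
Proof.
rewrite -(big_bool _ (fun x => \sum_(t : m.-tuple bool) F (x :: t))) /=.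
rewrite pair_big /=.
rewrite (reindex (fun xt : bool * m.-tuple bool => [tuple of xt.1 :: xt.2])) //=.
exists (fun t : m.+1.-tuple bool => (thead t, [tuple of behead t])).
  by case=> x t _ /=; congr pair; apply: val_inj.
by move=> t _; rewrite [in RHS](tuple_eta t).
Qed.

Definition Af m b := \sum_(t : m.-tuple bool) (if fpn b t then path_weight p q t * (hcn n1 b t)%:R else 0).
Definition Bf m b := \sum_(t : m.-tuple bool) (if fpn b t then path_weight p q t else 0).

Lemma big_tuple0 (F : seq bool -> R) : \sum_(t : 0.-tuple bool) F t = F [::].
Proof.
rewrite (bigD1 [tuple]) //= big1 ?addr0 // => t /eqP[]; exact: tuple0.
Qed.

Lemma Af0 b : Af 0 b = 0.
Proof. by rewrite /Af (big_tuple0 (fun w => if fpn b w then path_weight p q w * (hcn n1 b w)%:R else 0)) /= mulr0; case: ifP. Qed.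

Lemma Bf0 b : Bf 0 b = (b == 0%N)%:R.
Proof. by rewrite /Bf (big_tuple0 (fun w => if fpn b w then path_weight p q w else 0)) /=; case: (b == 0%N); rewrite /path_weight /= ?mulr1. Qed.

Definition cc b : R := (b.-1 < n1.-1)%N%:R.

Lemma AfS m b : Af m.+1 b = if b == 0%N then 0 else
  q * Af m b.+1 + p * (Af m b.-1 + cc b * Bf m b.-1).
Proof.
rewrite /Af (big_tuple_cons (fun w => if fpn b w then path_weight p q w * (hcn n1 b w)%:R else 0)) /=; case: b => [|b] /=.
  by rewrite !big1_eq addr0.
rewrite /Bf mulrDr mulrA; congr (_ + _).
  rewrite mulr_sumr; apply: eq_bigr => t _; case: ifP => _; rewrite ?mulr0 // pw_cons add0n /=; ring.
rewrite !mulr_sumr -big_split /=; apply: eq_bigr => t _; case: ifP => _; rewrite ?mulr0 ?addr0 //.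
by rewrite pw_cons natrD /cc /=; ring.
Qed.

Lemma BfS m b : Bf m.+1 b = if b == 0%N then 0 else q * Bf m b.+1 + p * Bf m b.-1.
Proof.
rewrite /Bf (big_tuple_cons (fun w => if fpn b w then path_weight p q w else 0)) /=; case: b => [|b] /=.
  by rewrite !big1_eq add0r.
rewrite !mulr_sumr; congr (_ + _).
  by apply: eq_bigr => t _; case: ifP => _; rewrite ?mulr0 // pw_cons.
by apply: eq_bigr => t _; case: ifP => _; rewrite ?mulr0 // pw_cons.
Qed.

Lemma H_term_Af m : H_term p q n1 m = Af m 1.
Proof.
rewrite /H_term /Af big_mkcond /=; apply: eq_bigr => t _.
have E : first_passage t = fpn 1 t.
  by rewrite -fpz_fpn /first_passage /fpz subrr; apply: congr2; [apply: eq_all => i; rewrite add0r | rewrite add0r].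
rewrite E; case: ifP => // h; congr (_ * _%:R).
by rewrite -hcz_hcn // /Hcount /hcz subrr; apply: eq_count => i; rewrite add0r.
Qed.

Definition Gs N b := \sum_(0 <= k < N) Af k b.
Definition Ps N b := \sum_(0 <= k < N) Bf k b.

Lemma Gs0 b : Gs 0 b = 0. Proof. by rewrite /Gs big_geq. Qed.
Lemma Ps0 b : Ps 0 b = 0. Proof. by rewrite /Ps big_geq. Qed.

Lemma GsS N b : Gs N.+1 b = if b == 0%N then 0 else
  q * Gs N b.+1 + p * (Gs N b.-1 + cc b * Ps N b.-1).
Proof.
rewrite /Gs /Ps big_nat_recl // Af0 add0r; case: b => [|b] /=.
  by rewrite big1 // => k _; rewrite AfS.
rewrite (eq_bigr (fun k => q * Af k b.+2 + p * (Af k b + cc b.+1 * Bf k b))); last by move=> k _; rewrite AfS.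
by rewrite big_split /= -!mulr_sumr big_split /= -mulr_sumr.
Qed.

Lemma PsS N b : Ps N.+1 b = if b == 0%N then 1 else q * Ps N b.+1 + p * Ps N b.-1.
Proof.
rewrite /Ps big_nat_recl // Bf0; case: b => [|b] /=.
  by rewrite big1 ?addr0 // => k _; rewrite BfS.
rewrite add0r (eq_bigr (fun k => q * Bf k b.+2 + p * Bf k b)); last by move=> k _; rewrite BfS.
by rewrite big_split /= -!mulr_sumr.
Qed.
End Sums.
Section Main.
Variable R : realType.
Variables (p q : R) (n1 : nat).
Hypotheses (hq : 0 < q) (hqp : q < p) (hpq : p + q = 1) (hn1 : (2 <= n1)%N).

Let hp : 0 < p. Proof. exact: lt_trans hqp. Qed.
Let hpmq : 0 < p - q. Proof. by rewrite subr_gt0. Qed.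

Definition hs := p / (p - q).
Definition rr := q / p.
Definition hh j := hs * (1 - rr ^+ (n1.-1 - j)).
Definition gg b := \sum_(j < b) hh j.

Let hs_ge0 : 0 <= hs. Proof. by rewrite /hs divr_ge0 // ltW. Qed.
Let rr_ge0 : 0 <= rr. Proof. by rewrite /rr divr_ge0 // ltW. Qed.
Let rr_le1 : rr <= 1. Proof. by rewrite /rr ler_pdivrMr // mul1r ltW. Qed.

Lemma hh_ge0 j : 0 <= hh j.
Proof. by rewrite /hh mulr_ge0 // subr_ge0 exprn_ile1. Qed.

Lemma hh_le j : hh j <= hs.
Proof.
rewrite /hh ler_piMr // lerBlDr lerDl; exact: exprn_ge0.
Qed.

Lemma gg_ge0 b : 0 <= gg b.
Proof. by rewrite /gg sumr_ge0 // => j _; exact: hh_ge0. Qed.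

Lemma ggS b : gg b.+1 = gg b + hh b.
Proof. by rewrite /gg big_ord_recr. Qed.

Lemma gg_le b : gg b <= (minn b n1.-1)%:R * hs.
Proof.
elim: b => [|b IH]; first by rewrite /gg big_ord0 min0n mul0r.
rewrite ggS; case: (ltnP b n1.-1) => hb.
  rewrite (_ : minn b.+1 n1.-1 = (minn b n1.-1).+1); last by lia.
  by rewrite mulrSr mulrDl mul1r lerD // hh_le.
rewrite (_ : minn b.+1 n1.-1 = minn b n1.-1); last by lia.
by rewrite /hh (_ : (n1.-1 - b = 0)%N) ?expr0 ?subrr ?mulr0 ?addr0 //; lia.
Qed.

Definition CC := n1%:R * hs.

Lemma gg_leC b : gg b <= CC.
Proof.
apply: le_trans (gg_le b) _; rewrite /CC ler_wpM2r // ler_nat; lia.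
Qed.

Lemma gg_rec b : gg b.+1 = q * gg b.+2 + p * (gg b + cc R n1 b.+1).
Proof.
rewrite !ggS /cc /=.
suff E : p * hh b = q * hh b.+1 + p * (b < n1.-1)%N%:R.
  apply/eqP; rewrite -subr_eq0; apply/eqP.
  transitivity ((p * hh b - (q * hh b.+1 + p * (b < n1.-1)%N%:R)) + (1 - (p + q)) * (gg b + hh b)); first ring.
  by rewrite E hpq !subrr mul0r addr0.
case: (ltnP b n1.-1) => hb.
  rewrite /hh (_ : (n1.-1 - b = (n1.-1 - b.+1).+1)%N); last by lia.
  rewrite (_ : true%:R = 1 :> R) // mulr1 exprS /hs /rr; set X := (_ ^+ _); field.
  by apply/andP; split; rewrite lt0r_neq0.
rewrite /hh (_ : (n1.-1 - b = 0)%N); last by lia.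
rewrite (_ : (n1.-1 - b.+1 = 0)%N); last by lia.
by rewrite !expr0 subrr !mulr0 add0r.
Qed.

Definition ss : R := (2 * q)^-1.
Definition rho : R := 2^-1 + 2 * p * q.
Definition sig : R := (1 + rho) / 2.
Definition KK : R := CC + p / (sig - rho).

Let q_lt_half : 2 * q < 1.
Proof. move: hqp hpq => h1 h2. lra. Qed.
Let ss_ge1 : 1 <= ss.
Proof. by rewrite /ss invf_ge1 ?ltW // mulr_gt0. Qed.
Let ss_ge0 : 0 <= ss. Proof. exact: le_trans ss_ge1. Qed.
Let rho_ge0 : 0 <= rho. Proof. rewrite /rho; apply: addr_ge0; [by [] | ]; apply: mulr_ge0; [|exact: ltW]; apply: mulr_ge0 => //; exact: ltW. Qed.
Let rho_lt1 : rho < 1.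
Proof. rewrite /rho; have : 0 < (p - q) ^+ 2 by rewrite exprn_gt0. rewrite expr2. move: (hq) (hqp) (hpq) => ? ? ?. nra. Qed.
Let rho_lt_sig : rho < sig. Proof. rewrite /sig; move: (rho_lt1) (rho_ge0) => ? ?; lra. Qed.
Let sig_ge0 : 0 <= sig. Proof. rewrite /sig; move: (rho_lt1) (rho_ge0) => ? ?; lra. Qed.
Let sig_lt1 : sig < 1. Proof. rewrite /sig; move: (rho_lt1) (rho_ge0) => ? ?; lra. Qed.
Let rho_s : rho * ss = q * ss ^+ 2 + p.
Proof.
by rewrite /rho /ss expr2; field; rewrite lt0r_neq0.
Qed.
Let CC_ge0 : 0 <= CC. Proof. by rewrite /CC mulr_ge0. Qed.
Let KK_ge : p <= KK * (sig - rho).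
Proof.
rewrite /KK mulrDl divfK; last by rewrite lt0r_neq0 // subr_gt0.
by rewrite lerDr mulr_ge0 // subr_ge0 ltW.
Qed.
Let KK_ge0 : 0 <= KK.
Proof. by rewrite /KK addr_ge0 // divr_ge0 ?subr_ge0 ?ltW. Qed.

Lemma Ps_le1 N b : Ps R p q N b <= 1.
Proof.
elim: N b => [|N IH] b; first by rewrite Ps0.
rewrite PsS; case: b => [|b] //=.
have h1 := IH b.+2; have h2 := IH b.
have : q * Ps R p q N b.+2 <= q by rewrite ler_piMr // ltW.
have : p * Ps R p q N b <= p by rewrite ler_piMr // ltW.
move: (hpq) => ?; lra.
Qed.

Lemma Ps_tail N b : 1 - Ps R p q N b <= rho ^+ N * ss ^+ b.
Proof.
elim: N b => [|N IH] b.
  by rewrite Ps0 subr0 expr0 mul1r exprn_ege1.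
rewrite PsS; case: b => [|b] /=.
  by rewrite subrr mulr_ge0 // exprn_ge0.
have h1 := ler_wpM2l (ltW hq) (IH b.+2).
have h2 := ler_wpM2l (ltW hp) (IH b).
have E : 1 - (q * Ps R p q N b.+2 + p * Ps R p q N b) =
   q * (1 - Ps R p q N b.+2) + p * (1 - Ps R p q N b).
  by rewrite -{1}hpq; ring.
rewrite E; apply: le_trans (lerD h1 h2) _.
have E3 : rho ^+ N.+1 * ss ^+ b.+1 = rho ^+ N * ss ^+ b * (rho * ss) by rewrite !exprS; ring.
rewrite E3 rho_s le_eqVlt; apply/orP; left; apply/eqP; rewrite !exprS; ring.
Qed.

Lemma Gs_le N b : Gs R p q n1 N b <= gg b.
Proof.
elim: N b => [|N IH] b; first by rewrite Gs0 gg_ge0.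
rewrite GsS; case: b => [|b] /=; first by rewrite /gg big_ord0.
rewrite gg_rec; apply: lerD; first by rewrite ler_pM2l.
rewrite ler_pM2l //; apply: lerD => //.
by rewrite ler_piMr ?ler0n ?Ps_le1.
Qed.

Lemma Gs_tail N b : gg b - Gs R p q n1 N b <= KK * sig ^+ N * ss ^+ b.
Proof.
elim: N b => [|N IH] b.
  rewrite Gs0 subr0 expr0 mulr1; apply: le_trans (gg_leC b) _.
  apply: le_trans (_ : CC <= KK) _; first by rewrite /KK lerDl divr_ge0 ?subr_ge0 ?ltW.
  by rewrite ler_peMr // exprn_ege1.
rewrite GsS; case: b => [|b] /=.
  by rewrite /gg big_ord0 subrr !mulr_ge0 // exprn_ge0.
have h1 := ler_wpM2l (ltW hq) (IH b.+2).
have h2 := ler_wpM2l (ltW hp) (IH b).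
have c01 : 0 <= cc R n1 b.+1 <= 1 by rewrite /cc ler0n /=; case: (_ < _)%N.
have t0 : 0 <= 1 - Ps R p q N b by rewrite subr_ge0 Ps_le1.
have h3 : p * (cc R n1 b.+1 * (1 - Ps R p q N b)) <= p * (rho ^+ N * ss ^+ b).
  apply: ler_wpM2l; first exact: ltW.
  apply: le_trans (Ps_tail N b).
  by case/andP: c01 => c0 c1; rewrite ler_piMl.
have E : gg b.+1 - (q * Gs R p q n1 N b.+2 + p * (Gs R p q n1 N b + cc R n1 b.+1 * Ps R p q N b)) =
   q * (gg b.+2 - Gs R p q n1 N b.+2) + p * (gg b - Gs R p q n1 N b) + p * (cc R n1 b.+1 * (1 - Ps R p q N b)).
  by rewrite gg_rec; ring.
rewrite E; apply: le_trans (lerD (lerD h1 h2) h3) _.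
have hrs : rho ^+ N <= sig ^+ N by rewrite lerXn2r // ?nnegrE // ltW.
have h4 : p * (rho ^+ N * ss ^+ b) <= KK * (sig - rho) * (sig ^+ N * ss ^+ b.+1).
  apply: ler_pM; [exact: ltW | by rewrite mulr_ge0 // exprn_ge0 | exact: KK_ge | ].
  apply: ler_pM; [exact: exprn_ge0 | exact: exprn_ge0 | exact: hrs | ].
  by rewrite exprS ler_peMl // exprn_ge0.
have E2 : q * (KK * sig ^+ N * ss ^+ b.+2) + p * (KK * sig ^+ N * ss ^+ b)
   = KK * sig ^+ N * ss ^+ b * (rho * ss).
  by rewrite rho_s !exprS; ring.
rewrite E2; apply: le_trans (lerD (lexx _) h4) _.
rewrite le_eqVlt; apply/orP; left; apply/eqP; rewrite !exprS; ring.
Qed.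


Lemma main_cvg : series (H_term p q n1) @ \oo --> p / (p - q) * (1 - (q / p) ^+ n1.-1).
Proof.
have E1 : series (H_term p q n1) = (fun N => Gs R p q n1 N 1).
  apply/funext => N; rewrite /series /Gs /=; apply: eq_bigr => k _; exact: H_term_Af.
have E2 : p / (p - q) * (1 - (q / p) ^+ n1.-1) = gg 1.
  by rewrite /gg big_ord1 /hh /hs /rr subn0.
rewrite E1 E2.
have T : (fun N => gg 1 - Gs R p q n1 N 1) @ \oo --> 0.
  apply: (@squeeze_cvgr _ _ _ _ (cst 0) (fun N => KK * sig ^+ N * ss ^+ 1)).
  - by near=> N; rewrite /= subr_ge0 Gs_le /= Gs_tail.
  - exact: cvg_cst.
  - rewrite -(mul0r (ss ^+ 1)) -(mulr0 KK).
    apply: cvgMr_tmp; apply: cvgMl_tmp; apply: cvg_expr.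
    by rewrite ger0_norm.
have eqf : (fun N => Gs R p q n1 N 1) = (fun N => gg 1 - (gg 1 - Gs R p q n1 N 1)).
  by apply/funext => N; rewrite subKr.
rewrite eqf -[X in _ --> X]subr0; apply: cvgB => //; exact: cvg_cst.
Unshelve. all: by end_near.
Qed.

End Main.

Theorem proposition6 (R : realType) (p q : R) (n1 : nat)
  (hq : 0 < q) (hqp : q < p) (hpq : p + q = 1) (hn1 : (2 <= n1)%N) :
  series (H_term p q n1) @ \oo -->
    p / (p - q) * (1 - (q / p) ^+ (n1.-1)).
Proof. exact: main_cvg. Qed.
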